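(* Let $M$ and $M'$ be matroids on disjoint ground sets. If at least one of $M$, $M'$ has the Borsuk property, then $M\oplus M'$ has the Borsuk property.
   Context: $M\oplus M'$ is the direct sum: ground set the disjoint union, bases the unions $B\cup B'$ with $B$ a basis of $M$ and $B'$ a basis of $M'$. For a matroid $M$, $\mathcal{B}(M)$ denotes its set of bases, and the distance between two bases $B,B'$ is $|B\triangle B'|$; $\operatorname{diam}$ denotes diameter. The Borsuk number $f(M)$ is the minimum number of parts in a partition of $\mathcal{B}(M)$ in which every part has diameter strictly smaller than $\operatorname{diam}(\mathcal{B}(M))$; if $M$ has exactly one basis, $f(M):=+\infty$. If $M$ has $n$ elements and $c$ connected components, $M$ has the Borsuk property if $f(M)\le n-c+1$. *)

(* Defs.v *)
(* Matroids on a finite ground set E (the whole finType),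
   given by their set of bases. *)
From mathcomp Require Import all_boot.
Set Implicit Arguments. Unset Strict Implicit. Unset Printing Implicit Defensive.

Section Matroids.
Variable E : finType.
Implicit Types (Bs P : {set {set E}}) (A B C I : {set E}).

Definition is_matroid_bases Bs : Prop :=
  Bs != set0 /\
  forall B1 B2, B1 \in Bs -> B2 \in Bs -> forall x, x \in B1 :\: B2 ->
    exists y, (y \in B2 :\: B1) && ((y |: (B1 :\ x)) \in Bs).

Definition indep Bs I : bool := [exists B in Bs, I \subset B].

Definition circuit Bs C : bool :=
  ~~ indep Bs C && [forall e in C, indep Bs (C :\ e)].

Definition connrel Bs (e f : E) : bool :=
  (e == f) || [exists C, [&& circuit Bs C, e \in C & f \in C]].

Definition ncomp Bs : nat := #|[set [set f | connrel Bs e f] | e : E]|.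

Definition bdist A B : nat := #|(A :\: B) :|: (B :\: A)|.

Definition diam (P : {set {set E}}) : nat :=
  \max_(A in P) \max_(B in P) bdist A B.

Definition borsuk_partition Bs (Q : {set {set {set E}}}) : bool :=
  partition Q Bs && [forall X in Q, diam X < diam Bs].

(* f(M) <= k  (f(M) = +oo, i.e. never <= k, when no such partition exists,
   e.g. when M has a single basis) *)
Definition borsuk_le Bs (k : nat) : bool :=
  [exists Q, borsuk_partition Bs Q && (#|Q| <= k)].

Definition borsuk_property Bs : bool :=
  borsuk_le Bs (#|E| - ncomp Bs + 1).

End Matroids.

Definition dsum (E E' : finType) (Bs : {set {set E}}) (Bs' : {set {set E'}})
  : {set {set (E + E')%type}} :=
  [set ((inl @: B) :|: (inr @: B') : {set (E + E')%type}) | B : {set E} in Bs, B' : {set E'} in Bs'].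

(* Main.v *)
Require Import Defs.
From mathcomp Require Import all_boot zify.
Set Implicit Arguments. Unset Strict Implicit. Unset Printing Implicit Defensive.

Section DS.
Variables E E' : finType.
Definition phi (B : {set E}) (B' : {set E'}) : {set (E + E')%type} :=
  (inl @: B) :|: (inr @: B').

Lemma mem_phil B B' a : (inl a \in phi B B') = (a \in B).
Proof.
rewrite /phi inE mem_imset; last by move=> ? ? [].
by case: (a \in B) => //=; apply/imsetP => -[].
Qed.

Lemma mem_phir B B' a : (inr a \in phi B B') = (a \in B').
Proof.
rewrite /phi inE (mem_imset _ _ (@inr_inj _ _)).
have -> : (inr a \in inl @: B) = false by apply/imsetP => -[].
by [].
Qed.

Lemma phi_inj B1 B1' B2 B2' : phi B1 B1' = phi B2 B2' -> B1 = B2 /\ B1' = B2'.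
Proof.
move=> h; split; apply/setP => a.
  by rewrite -(mem_phil B1 B1') -(mem_phil B2 B2') h.
by rewrite -(mem_phir B1 B1') -(mem_phir B2 B2') h.
Qed.

Lemma card_phi B B' : #|phi B B'| = #|B| + #|B'|.
Proof.
rewrite /phi cardsU !card_imset; try by move=> ? ? [].
suff -> : inl @: B :&: inr @: B' = set0 by rewrite cards0 subn0.
apply/setP => -[a|a]; rewrite !inE.
  by apply/andP => -[_ /imsetP[]].
by apply/andP => -[/imsetP[]].
Qed.

Lemma bdist_phi B1 B1' B2 B2' :
  bdist (phi B1 B1') (phi B2 B2') = bdist B1 B2 + bdist B1' B2'.
Proof.
rewrite /bdist -card_phi.
have -> : (phi B1 B1' :\: phi B2 B2') :|: (phi B2 B2' :\: phi B1 B1') =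
  phi ((B1 :\: B2) :|: (B2 :\: B1)) ((B1' :\: B2') :|: (B2' :\: B1')).
  apply/setP => -[a|a].
    by rewrite (mem_phil (B1 :\: B2 :|: B2 :\: B1)) in_setU !in_setD (mem_phil B1) (mem_phil B2) !inE.
  by rewrite (mem_phir (B1 :\: B2 :|: B2 :\: B1)) in_setU !in_setD (mem_phir B1) (mem_phir B2) !inE.
by [].
Qed.

Lemma diam_le (T : finType) (P : {set {set T}}) d :
  (forall A B, A \in P -> B \in P -> bdist A B <= d) -> diam P <= d.
Proof.
move=> h; apply/bigmax_leqP => A hA; apply/bigmax_leqP => B hB; exact: h.
Qed.

Lemma le_diam (T : finType) (P : {set {set T}}) A B :
  A \in P -> B \in P -> bdist A B <= diam P.
Proof.
move=> hA hB; rewrite /diam.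
apply: leq_trans (leq_bigmax_cond _ hA).
exact: (leq_bigmax_cond _ hB).
Qed.

Lemma bdist0 (T : finType) (A : {set T}) : bdist A A = 0.
Proof. by rewrite /bdist setDv setU0 cards0. Qed.

Lemma mem_dsum (Bs : {set {set E}}) (Bs' : {set {set E'}}) S :
  reflect (exists B B', [/\ B \in Bs, B' \in Bs' & S = phi B B']) (S \in dsum Bs Bs').
Proof.
apply: (iffP imset2P) => [[B B' h1 h2 ->]|[B [B' [h1 h2 ->]]]].
  by exists B, B'.
by exists B B'.
Qed.

Lemma diam_dsum (Bs : {set {set E}}) (Bs' : {set {set E'}}) :
  Bs != set0 -> Bs' != set0 ->
  diam Bs + diam Bs' <= diam (dsum Bs Bs').
Proof.
move=> /set0Pn[A0 hA0] /set0Pn[A0' hA0'].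
set D := diam (dsum Bs Bs').
have H : forall A B A' B', A \in Bs -> B \in Bs -> A' \in Bs' -> B' \in Bs' ->
   bdist A B + bdist A' B' <= D.
  move=> A B A' B' hA hB hA' hB'; rewrite -bdist_phi; apply: le_diam;
  by [apply/mem_dsum; exists A, A' | apply/mem_dsum; exists B, B'].  
have h1 : diam Bs' <= D.
  apply: diam_le => A' B' hA' hB'.
  by have := H _ _ _ _ hA0 hA0 hA' hB'; rewrite bdist0.
suff : diam Bs <= D - diam Bs' by lia.
apply: diam_le => A B hA hB.
have h2 := H _ _ _ _ hA hB hA0' hA0'; rewrite bdist0 addn0 in h2.
suff : diam Bs' <= D - bdist A B by lia.
apply: diam_le => A' B' hA' hB'.
have := H _ _ _ _ hA hB hA' hB'; lia.
Qed.

Section Mat.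
Variables (Bs : {set {set E}}) (Bs' : {set {set E'}}).
Hypotheses (hBs : Bs != set0) (hBs' : Bs' != set0).

Definition LL (I : {set (E + E')%type}) : {set E} := inl @^-1: I.
Definition RR (I : {set (E + E')%type}) : {set E'} := inr @^-1: I.

Lemma sub_phi (I : {set (E + E')%type}) B B' : (I \subset phi B B') = (LL I \subset B) && (RR I \subset B').
Proof.
apply/idP/andP => [h|[h1 h2]].
  split; apply/subsetP => a; rewrite inE => /(subsetP h).
    by rewrite (mem_phil B).
  by rewrite (mem_phir B).
apply/subsetP => -[a|a] hx.
  by rewrite (mem_phil B); apply: (subsetP h1); rewrite inE.
by rewrite (mem_phir B); apply: (subsetP h2); rewrite inE.
Qed.

Lemma indep_dsum (I : {set (E + E')%type}) : indep (dsum Bs Bs') I = indep Bs (LL I) && indep Bs' (RR I).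
Proof.
rewrite /indep; apply/existsP/andP => [[S /andP[/mem_dsum[B [B' [hB hB' ->]]] hs]]|].
  rewrite sub_phi in hs; case/andP: hs => h1 h2.
  by split; apply/existsP; [exists B | exists B']; apply/andP.
move=> [/existsP[B /andP[hB h1]] /existsP[B' /andP[hB' h2]]].
exists (phi B B'); rewrite sub_phi h1 h2 /= andbT.
by apply/mem_dsum; exists B, B'.
Qed.

Lemma indep0 (T : finType) (P : {set {set T}}) : P != set0 -> indep P set0.
Proof. by case/set0Pn => B hB; apply/existsP; exists B; rewrite hB sub0set. Qed.

Lemma LL_l (C : {set (E + E')%type}) x : LL (C :\ inl x) = LL C :\ x.
Proof. by apply/setP => a; rewrite !inE (inj_eq inl_inj). Qed.
Lemma RR_l (C : {set (E + E')%type}) x : RR (C :\ inl x) = RR C.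
Proof. by apply/setP => a; rewrite !inE. Qed.
Lemma LL_r (C : {set (E + E')%type}) x : LL (C :\ inr x) = LL C.
Proof. by apply/setP => a; rewrite !inE. Qed.
Lemma RR_r (C : {set (E + E')%type}) x : RR (C :\ inr x) = RR C :\ x.
Proof. by apply/setP => a; rewrite !inE (inj_eq inr_inj). Qed.
Lemma LL_phi B B' : LL (phi B B') = B.
Proof. by apply/setP => a; rewrite inE (mem_phil B). Qed.
Lemma RR_phi B B' : RR (phi B B') = B'.
Proof. by apply/setP => a; rewrite inE (mem_phir B). Qed.

Lemma circuit_l (C : {set (E + E')%type}) x : circuit (dsum Bs Bs') C -> inl x \in C ->
  RR C = set0 /\ circuit Bs (LL C).
Proof.
move=> /andP[hn /forallP hall] hx.
have := hall (inl x); rewrite hx /= indep_dsum LL_l RR_l => /andP[h1 h2].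
rewrite indep_dsum h2 andbT in hn.
split.
  apply/setP => y; rewrite !inE; apply/negbTE/negP => hy.
  have := hall (inr y); rewrite hy /= indep_dsum LL_r.
  by rewrite (negbTE hn).
rewrite /circuit hn /=; apply/forallP => a; apply/implyP => ha.
rewrite inE in ha.
by have := hall (inl a); rewrite ha /= indep_dsum LL_l => /andP[].
Qed.

Lemma circuit_r (C : {set (E + E')%type}) x : circuit (dsum Bs Bs') C -> inr x \in C ->
  LL C = set0 /\ circuit Bs' (RR C).
Proof.
move=> /andP[hn /forallP hall] hx.
have := hall (inr x); rewrite hx /= indep_dsum LL_r RR_r => /andP[h1 h2].
rewrite indep_dsum h1 /= in hn.
split.
  apply/setP => y; rewrite !inE; apply/negbTE/negP => hy.
  have := hall (inl y); rewrite hy /= indep_dsum RR_l.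
  by rewrite (negbTE hn) andbF.
rewrite /circuit hn /=; apply/forallP => a; apply/implyP => ha.
rewrite inE in ha.
by have := hall (inr a); rewrite ha /= indep_dsum RR_r => /andP[].
Qed.

Lemma circuit_phil C0 : circuit Bs C0 -> circuit (dsum Bs Bs') (phi C0 set0).
Proof.
move=> /andP[hn /forallP hall]; rewrite /circuit indep_dsum LL_phi (negbTE hn) /=.
apply/forallP => -[a|a]; apply/implyP.
  rewrite (mem_phil C0) => ha.
  rewrite indep_dsum LL_l RR_l LL_phi RR_phi indep0 // andbT.
  by have := hall a; rewrite ha.
by rewrite (mem_phir C0) inE.
Qed.

Lemma circuit_phir C0 : circuit Bs' C0 -> circuit (dsum Bs Bs') (phi set0 C0).
Proof.
move=> /andP[hn /forallP hall]; rewrite /circuit indep_dsum RR_phi (negbTE hn) andbF /=.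
apply/forallP => -[a|a]; apply/implyP.
  by rewrite (mem_phil set0) inE.
rewrite (mem_phir set0) => ha.
rewrite indep_dsum LL_r RR_r LL_phi RR_phi indep0 //=.
by have := hall a; rewrite ha.
Qed.

Lemma connrel_ll x x' : connrel (dsum Bs Bs') (inl x) (inl x') = connrel Bs x x'.
Proof.
rewrite /connrel (inj_eq inl_inj); congr orb.
apply/existsP/existsP => [[C /and3P[hC h1 h2]]|[C0 /and3P[hC h1 h2]]].
  have [_ hc] := circuit_l hC h1.
  by exists (LL C); rewrite hc !inE h1 h2.
exists (phi C0 set0); rewrite circuit_phil //=.
by rewrite (mem_phil C0) h1 (mem_phil C0).
Qed.

Lemma connrel_rr x x' : connrel (dsum Bs Bs') (inr x) (inr x') = connrel Bs' x x'.
Proof.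
rewrite /connrel (inj_eq inr_inj); congr orb.
apply/existsP/existsP => [[C /and3P[hC h1 h2]]|[C0 /and3P[hC h1 h2]]].
  have [_ hc] := circuit_r hC h1.
  by exists (RR C); rewrite hc !inE h1 h2.
exists (phi set0 C0); rewrite circuit_phir //=.
by rewrite (mem_phir set0) h1 (mem_phir set0).
Qed.

Lemma connrel_lr x y : connrel (dsum Bs Bs') (inl x) (inr y) = false.
Proof.
rewrite /connrel /=; apply/existsP => -[C /and3P[hC h1 h2]].
have [hR _] := circuit_l hC h1.
have : y \in RR C by rewrite inE.
by rewrite hR inE.
Qed.

Lemma connrel_rl x y : connrel (dsum Bs Bs') (inr x) (inl y) = false.
Proof.
rewrite /connrel /=; apply/existsP => -[C /and3P[hC h1 h2]].
have [hR _] := circuit_r hC h1.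
have : y \in LL C by rewrite inE.
by rewrite hR inE.
Qed.


Definition cls (T : finType) (P : {set {set T}}) (e : T) := [set f | connrel P e f].

Lemma cls_l x : cls (dsum Bs Bs') (inl x) = inl @: cls Bs x.
Proof.
apply/setP => -[a|a]; rewrite inE.
  by rewrite (mem_imset _ _ inl_inj) inE connrel_ll.
by rewrite connrel_lr; apply/esym/imsetP => -[].
Qed.

Lemma cls_r x : cls (dsum Bs Bs') (inr x) = inr @: cls Bs' x.
Proof.
apply/setP => -[a|a]; rewrite inE.
  by rewrite connrel_rl; apply/esym/imsetP => -[].
by rewrite (mem_imset _ _ inr_inj) inE connrel_rr.
Qed.

Lemma ncomp_le (T : finType) (P : {set {set T}}) : ncomp P <= #|T|.
Proof. by rewrite /ncomp; apply: leq_trans (leq_imset_card _ _) _; apply: max_card. Qed.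

Lemma ncomp_dsum_l : ncomp (dsum Bs Bs') <= ncomp Bs + #|E'|.
Proof.
rewrite /ncomp.
pose A : {set {set (E + E')%type}} := [set inl @: S | S : {set E} in [set [set f | connrel Bs e f] | e : E]].
pose B : {set {set (E + E')%type}} := [set cls (dsum Bs Bs') (inr y) | y : E'].
have hs : [set [set f | connrel (dsum Bs Bs') e f] | e : (E + E')%type] \subset A :|: B.
  apply/subsetP => S /imsetP[[x|y] _ ->]; rewrite inE; apply/orP.
    left; have := cls_l x; rewrite /cls => ->.
    by apply: imset_f; apply: imset_f.
  by right; apply: imset_f.
apply: leq_trans (subset_leq_card hs) _.
apply: leq_trans (leq_card_setU A B) _.
apply: leq_add; first exact: leq_imset_card.
by apply: leq_trans (leq_imset_card _ _) _; apply: max_card.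
Qed.

Lemma ncomp_dsum_r : ncomp (dsum Bs Bs') <= #|E| + ncomp Bs'.
Proof.
rewrite /ncomp.
pose A : {set {set (E + E')%type}} := [set cls (dsum Bs Bs') (inl y) | y : E].
pose B : {set {set (E + E')%type}} := [set inr @: S | S : {set E'} in [set [set f | connrel Bs' e f] | e : E']].
have hs : [set [set f | connrel (dsum Bs Bs') e f] | e : (E + E')%type] \subset A :|: B.
  apply/subsetP => S /imsetP[[x|y] _ ->]; rewrite inE; apply/orP.
    by left; apply: imset_f.
  right; have := cls_r y; rewrite /cls => ->.
  by apply: imset_f; apply: imset_f.
apply: leq_trans (subset_leq_card hs) _.
apply: leq_trans (leq_card_setU A B) _.
apply: leq_add; last exact: leq_imset_card.
by apply: leq_trans (leq_imset_card _ _) _; apply: max_card.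
Qed.


Lemma borsuk_l (Q : {set {set {set E}}}) : borsuk_partition Bs Q ->
  exists Q', borsuk_partition (dsum Bs Bs') Q' && (#|Q'| <= #|Q|).
Proof.
case/andP => /and3P[hcov htriv hnil] /forallP hdiam.
pose part (X : {set {set E}}) : {set {set (E + E')%type}} :=
  [set phi B B' | B in X, B' in Bs'].
exists [set part X | X in Q]; rewrite leq_imset_card andbT.
apply/andP; split.
  apply/and3P; split.
  - apply/eqP/setP => S; rewrite /cover; apply/bigcupP/mem_dsum.
      move=> [Y /imsetP[X hX ->] /imset2P[B B' hB hB' ->]].
      exists B, B'; split => //.
      by rewrite -(eqP hcov); apply/bigcupP; exists X.
    move=> [B [B' [hB hB' ->]]].
    rewrite -(eqP hcov) in hB; case/bigcupP: hB => X hX hBX.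
    by exists (part X); [apply: imset_f | apply/imset2P; exists B B'].
  - apply/trivIsetP => Y1 Y2 /imsetP[X1 h1 ->] /imsetP[X2 h2 ->] hne.
    have hX : X1 != X2 by apply: contraNneq hne => ->.
    have hd := trivIsetP htriv X1 X2 h1 h2 hX.
    rewrite -setI_eq0; apply/eqP/setP => S; rewrite !inE.
    apply/andP => -[/imset2P[B1 B1' hb1 _ ->] /imset2P[B2 B2' hb2 _ he]].
    have [e1 _] := phi_inj he; subst B2.
    by rewrite (disjointFr hd hb1) in hb2.
  - apply/imsetP => -[X hX h0].
    have : X != set0 by apply: contraNneq hnil => <-.
    case/set0Pn => B hB; case/set0Pn: hBs' => B' hB'.
    have : phi B B' \in part X by apply/imset2P; exists B B'.
    by rewrite -h0 inE.
apply/forallP => Y; apply/implyP => /imsetP[X hX ->].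
have hd := hdiam X; rewrite hX /= in hd.
apply: leq_trans (diam_dsum hBs hBs').
suff : diam (part X) <= diam X + diam Bs' by move=> h; apply: leq_ltn_trans h _; rewrite ltn_add2r.
apply: diam_le => S1 S2 /imset2P[B1 B1' h1 h1' ->] /imset2P[B2 B2' h2 h2' ->].
by rewrite bdist_phi; apply: leq_add; apply: le_diam.
Qed.

Lemma borsuk_r (Q : {set {set {set E'}}}) : borsuk_partition Bs' Q ->
  exists Q', borsuk_partition (dsum Bs Bs') Q' && (#|Q'| <= #|Q|).
Proof.
case/andP => /and3P[hcov htriv hnil] /forallP hdiam.
pose part (X : {set {set E'}}) : {set {set (E + E')%type}} :=
  [set phi B B' | B in Bs, B' in X].
exists [set part X | X in Q]; rewrite leq_imset_card andbT.
apply/andP; split.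
  apply/and3P; split.
  - apply/eqP/setP => S; rewrite /cover; apply/bigcupP/mem_dsum.
      move=> [Y /imsetP[X hX ->] /imset2P[B B' hB hB' ->]].
      exists B, B'; split => //.
      by rewrite -(eqP hcov); apply/bigcupP; exists X.
    move=> [B [B' [hB hB' ->]]].
    rewrite -(eqP hcov) in hB'; case/bigcupP: hB' => X hX hBX.
    by exists (part X); [apply: imset_f | apply/imset2P; exists B B'].
  - apply/trivIsetP => Y1 Y2 /imsetP[X1 h1 ->] /imsetP[X2 h2 ->] hne.
    have hX : X1 != X2 by apply: contraNneq hne => ->.
    have hd := trivIsetP htriv X1 X2 h1 h2 hX.
    rewrite -setI_eq0; apply/eqP/setP => S; rewrite !inE.
    apply/andP => -[/imset2P[B1 B1' _ hb1 ->] /imset2P[B2 B2' _ hb2 he]].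
    have [_ e1] := phi_inj he; subst B2'.
    by rewrite (disjointFr hd hb1) in hb2.
  - apply/imsetP => -[X hX h0].
    have : X != set0 by apply: contraNneq hnil => <-.
    case/set0Pn => B' hB'; case/set0Pn: hBs => B hB.
    have : phi B B' \in part X by apply/imset2P; exists B B'.
    by rewrite -h0 inE.
apply/forallP => Y; apply/implyP => /imsetP[X hX ->].
have hd := hdiam X; rewrite hX /= in hd.
apply: leq_trans (diam_dsum hBs hBs').
suff : diam (part X) <= diam Bs + diam X by move=> h; apply: leq_ltn_trans h _; rewrite ltn_add2l.
apply: diam_le => S1 S2 /imset2P[B1 B1' h1 h1' ->] /imset2P[B2 B2' h2 h2' ->].
by rewrite bdist_phi; apply: leq_add; apply: le_diam.
Qed.

End Mat.
End DS.

Lemma arith_l q e e' c s : q <= e - c + 1 -> s <= c + e' -> c <= e -> q <= e + e' - s + 1.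
Proof. lia. Qed.
Lemma arith_r q e e' c s : q <= e' - c + 1 -> s <= e + c -> c <= e' -> q <= e + e' - s + 1.
Proof. lia. Qed.

Theorem corollary4p3 (E E' : finType) (Bs : {set {set E}}) (Bs' : {set {set E'}}) :
  is_matroid_bases Bs -> is_matroid_bases Bs' ->
  borsuk_property Bs \/ borsuk_property Bs' ->
  borsuk_property (dsum Bs Bs').
Proof.
move=> [hBs _] [hBs' _] [] /existsP[Q /andP[hQ hc]].
  have [Q' /andP[hQ' hc']] := borsuk_l hBs hBs' hQ.
  apply/existsP; exists Q'; rewrite hQ' /=.
  have h1 : ncomp (dsum Bs Bs') <= ncomp Bs + #|E'| by apply: ncomp_dsum_l.
  have h2 := ncomp_le Bs.
  rewrite card_sum; exact: arith_l (leq_trans hc' hc) h1 h2.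
have [Q' /andP[hQ' hc']] := borsuk_r hBs hBs' hQ.
apply/existsP; exists Q'; rewrite hQ' /=.
have h1 : ncomp (dsum Bs Bs') <= #|E| + ncomp Bs' by apply: ncomp_dsum_r.
have h2 := ncomp_le Bs'.
rewrite card_sum; exact: arith_r (leq_trans hc' hc) h1 h2.
Qed.
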